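(* Let $\mathcal X,\mathcal Y$ be finite sets, let $B_1,\dots,B_r$ be $\mathcal X\times\mathcal Y$ blocky matrices, and let $\Gamma:\{0,1\}^r\to\{0,1\}$ be any function. Then the Boolean matrix $F$ defined by $F(x,y)=\Gamma(B_1(x,y),\dots,B_r(x,y))$ for $(x,y)\in\mathcal X\times\mathcal Y$ satisfies $\|F\|_{\gamma_2}\le 3^r$.
   Context: A Boolean matrix $F\in\{0,1\}^{\mathcal X\times\mathcal Y}$ is called blocky if there exist pairwise disjoint sets $\mathcal X_i\subseteq\mathcal X$ and pairwise disjoint sets $\mathcal Y_i\subseteq\mathcal Y$ such that the support $\{(x,y):F(x,y)=1\}$ of $F$ equals $\bigcup_i \mathcal X_i\times\mathcal Y_i$. For a real $\mathcal X\times\mathcal Y$ matrix $A$, the $\gamma_2$-factorization norm $\|A\|_{\gamma_2}$ is the infimum of all $c$ such that there exist a positive integer $d$ and vectors $u_x,v_y\in\mathbb{R}^d$ with $\langle u_x,v_y\rangle=A(x,y)$ and $\|u_x\|_2\|v_y\|_2\le c$ for all $x\in\mathcal X,y\in\mathcal Y$. *)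

(* Defs.v *)
From HB Require Import structures.
From mathcomp Require Import all_boot all_order all_algebra.
From mathcomp Require Import boolp classical_sets reals.
Set Implicit Arguments. Unset Strict Implicit. Unset Printing Implicit Defensive.
Import Order.TTheory GRing.Theory Num.Theory.
Local Open Scope ring_scope.

Definition blocky (X Y : finType) (F : X -> Y -> bool) : Prop :=
  exists (k : nat) (Xs : 'I_k -> {set X}) (Ys : 'I_k -> {set Y}),
    (forall i j, i != j -> [disjoint Xs i & Xs j]) /\
    (forall i j, i != j -> [disjoint Ys i & Ys j]) /\
    (forall x y, F x y = [exists i, (x \in Xs i) && (y \in Ys i)]).

Definition dotv (R : realType) (d : nat) (u v : 'rV[R]_d) : R :=
  \sum_(i < d) u ord0 i * v ord0 i.
Definition norm2 (R : realType) (d : nat) (u : 'rV[R]_d) : R :=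
  Num.sqrt (dotv u u).

Local Open Scope classical_set_scope.

Definition gamma2 (R : realType) (X Y : finType) (A : X -> Y -> R) : R :=
  inf [set c : R | exists (d : nat) (u : X -> 'rV[R]_d) (v : Y -> 'rV[R]_d),
        (0 < d)%N /\
        (forall x y, dotv (u x) (v y) = A x y) /\
        (forall x y, norm2 (u x) * norm2 (v y) <= c)].

(* Main.v *)
Require Import Defs.
From HB Require Import structures.
From mathcomp Require Import all_boot all_order all_algebra.
From mathcomp Require Import boolp classical_sets reals.
From mathcomp Require Import ring lra.
Import Order.TTheory GRing.Theory Num.Theory.
Local Open Scope ring_scope.

Section Fct.
Set Implicit Arguments. Unset Strict Implicit.
Variables (R : realType) (X Y : finType).

Definition fct (A : X -> Y -> R) (c : R) : Prop :=
  exists (I : finType) (u : X -> I -> R) (v : Y -> I -> R),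
    (forall x y, \sum_i u x i * v y i = A x y) /\
    (forall x, \sum_i u x i ^+ 2 <= c) /\ (forall y, \sum_i v y i ^+ 2 <= c).

Lemma fct_ext A A' c c' : fct A c -> (forall x y, A x y = A' x y) -> c <= c' -> fct A' c'.
Proof.
move=> + eA lc => -[I [u [v [h1 [h2 h3]]]]]; exists I, u, v; split; last split.
- by move=> x y; rewrite h1.
- by move=> x; apply: le_trans (h2 x) lc.
- by move=> y; apply: le_trans (h3 y) lc.
Qed.

Lemma fct_add A B c c' : fct A c -> fct B c' -> fct (fun x y => A x y + B x y) (c + c').
Proof.
move=> [I [u [v [h1 [h2 h3]]]]] [J [u' [v' [h1' [h2' h3']]]]].
exists (I + J)%type, (fun x k => match k with inl i => u x i | inr j => u' x j end),
  (fun y k => match k with inl i => v y i | inr j => v' y j end).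
split; last split.
- by move=> x y; rewrite big_sumType /= h1 h1'.
- by move=> x; rewrite big_sumType /= lerD.
- by move=> y; rewrite big_sumType /= lerD.
Qed.

Lemma fct_neg A c : fct A c -> fct (fun x y => - A x y) c.
Proof.
move=> [I [u [v [h1 [h2 h3]]]]]; exists I, (fun x i => - u x i), v; split; last split.
- by move=> x y; rewrite -h1 -sumrN; apply: eq_bigr => i _; rewrite mulNr.
- by move=> x; under eq_bigr do rewrite sqrrN.
- by [].
Qed.

Lemma sumsq_ge0 (I : finType) (f : I -> R) : 0 <= \sum_i f i ^+ 2.
Proof. by apply: sumr_ge0 => i _; apply: sqr_ge0. Qed.

Lemma fct_mul A B c c' : fct A c -> fct B c' -> fct (fun x y => A x y * B x y) (c * c').
Proof.
move=> [I [u [v [h1 [h2 h3]]]]] [J [u' [v' [h1' [h2' h3']]]]].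
exists (I * J)%type, (fun x k => u x k.1 * u' x k.2), (fun y k => v y k.1 * v' y k.2).
split; last split.
- move=> x y; rewrite -h1 -h1' mulr_suml; under [RHS]eq_bigr do rewrite mulr_sumr.
  rewrite pair_big; apply: eq_bigr => -[i j] _ /=; ring.
- move=> x; have -> : \sum_(k : I * J) (u x k.1 * u' x k.2) ^+ 2 =
      (\sum_i u x i ^+ 2) * (\sum_j u' x j ^+ 2).
    rewrite mulr_suml; under [RHS]eq_bigr do rewrite mulr_sumr.
    rewrite pair_big; apply: eq_bigr => -[i j] _ /=; ring.
  by apply: ler_pM; [exact: sumsq_ge0| exact: sumsq_ge0|by []|by []].
- move=> y; have -> : \sum_(k : I * J) (v y k.1 * v' y k.2) ^+ 2 =
      (\sum_i v y i ^+ 2) * (\sum_j v' y j ^+ 2).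
    rewrite mulr_suml; under [RHS]eq_bigr do rewrite mulr_sumr.
    rewrite pair_big; apply: eq_bigr => -[i j] _ /=; ring.
  by apply: ler_pM; [exact: sumsq_ge0| exact: sumsq_ge0|by []|by []].
Qed.

Lemma fct_one : fct (fun _ _ => 1) 1.
Proof.
exists ('I_1 : finType), (fun _ _ => 1), (fun _ _ => 1); split; last split;
  by move=> *; rewrite big_ord1 ?mulr1 ?expr1n.
Qed.


Lemma sum_uniq_ind (k : nat) (f : 'I_k -> bool) :
  (forall i j, f i -> f j -> i = j) ->
  \sum_i ((f i : nat)%:R : R) = (([exists i, f i] : bool) : nat)%:R.
Proof.
move=> uf; case: (boolP [exists i, f i]) => [/existsP [i fi]|/existsPn nf].
- rewrite (bigD1 i) //= fi big1 ?addr0 // => j ji.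
  case fj: (f j) => //; by have := uf _ _ fi fj => eij; rewrite eij eqxx in ji.
- by rewrite big1 // => i _; rewrite (negbTE (nf i)).
Qed.

Lemma fct_blocky (F : X -> Y -> bool) : blocky F -> fct (fun x y => ((F x y : nat)%:R : R)) 1.
Proof.
move=> [k [Xs [Ys [dX [dY hF]]]]].
have uX : forall x i j, x \in Xs i -> x \in Xs j -> i = j.
  move=> x i j hi hj; apply/eqP; apply: contraT => nij.
  by rewrite (disjointFr (dX _ _ nij) hi) in hj.
have uY : forall y i j, y \in Ys i -> y \in Ys j -> i = j.
  move=> y i j hi hj; apply/eqP; apply: contraT => nij.
  by rewrite (disjointFr (dY _ _ nij) hi) in hj.
have sq : forall b : bool, ((b : nat)%:R : R) ^+ 2 = (b : nat)%:R by case; rewrite ?expr1n ?expr0n.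
exists ('I_k : finType), (fun x i => (((x \in Xs i) : nat)%:R : R)),
  (fun y i => (((y \in Ys i) : nat)%:R : R)); split; last split.
- move=> x y; rewrite hF -(@sum_uniq_ind _ (fun i => (x \in Xs i) && (y \in Ys i))).
    by apply: eq_bigr => i _; case: (x \in Xs i); case: (y \in Ys i); rewrite ?mulr0 ?mulr1 ?mul0r.
  by move=> i j /andP [hi _] /andP [hj _]; apply: (uX x).
- move=> x; under eq_bigr do rewrite sq.
  rewrite (@sum_uniq_ind _ (fun i => x \in Xs i)); last exact: uX.
  by case: [exists _, _]; rewrite ?ler01.
- move=> y; under eq_bigr do rewrite sq.
  rewrite (@sum_uniq_ind _ (fun i => y \in Ys i)); last exact: uY.
  by case: [exists _, _]; rewrite ?ler01.
Qed.

Lemma fct_prod (T : Type) (s : seq T) (f : T -> X -> Y -> R) (c : T -> R) :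
  (forall t, fct (f t) (c t)) ->
  fct (fun x y => \prod_(t <- s) f t x y) (\prod_(t <- s) c t).
Proof.
move=> hf; elim: s => [|t s IH].
  by apply: (fct_ext fct_one) => *; rewrite big_nil.
apply: (fct_ext (fct_mul (hf t) IH)) => *; by rewrite big_cons.
Qed.

Lemma fct_zero : fct (fun _ _ => 0) 0.
Proof.
exists ('I_1 : finType), (fun _ _ => 0), (fun _ _ => 0); split; last split;
  by move=> *; rewrite big_ord1 ?mulr0 ?expr0n.
Qed.

Lemma fct_sum (T : Type) (s : seq T) (P : pred T) (f : T -> X -> Y -> R) (c : T -> R) :
  (forall t, P t -> fct (f t) (c t)) ->
  fct (fun x y => \sum_(t <- s | P t) f t x y) (\sum_(t <- s | P t) c t).
Proof.
move=> hf; elim: s => [|t s IH].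
  by apply: (fct_ext fct_zero) => *; rewrite big_nil.
case Pt: (P t).
  apply: (fct_ext (fct_add (hf t Pt) IH)) => *; by rewrite big_cons Pt.
apply: (fct_ext IH) => *; by rewrite big_cons Pt.
Qed.

End Fct.

Lemma fct_gamma2 (R : realType) (X Y : finType) (A : X -> Y -> R) (c : R) :
  0 <= c -> fct A c -> gamma2 A <= c.
Proof.
move=> c0 [I [u [v [h1 [h2 h3]]]]].
pose I' : finType := (I + 'I_1)%type.
pose uo x (o : I') := match o with inl i => u x i | inr _ => 0 end.
pose vo y (o : I') := match o with inl i => v y i | inr _ => 0 end.
have sumo : forall g : I' -> R, \sum_(j < #|I'|) g (enum_val j) = \sum_o g o.
  by move=> g; rewrite -big_enum_val.
pose u' x := \row_(j < #|I'|) uo x (enum_val j).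
pose v' y := \row_(j < #|I'|) vo y (enum_val j).
have dotE : forall x y, dotv (u' x) (v' y) = A x y.
  move=> x y; rewrite /dotv; under eq_bigr do rewrite !mxE.
  rewrite (sumo (fun o => uo x o * vo y o)) big_sumType /= big_ord1 mul0r addr0.
  exact: h1.
have nu : forall x, norm2 (u' x) <= Num.sqrt c.
  move=> x; rewrite /norm2 /dotv ler_wsqrtr //; under eq_bigr do rewrite !mxE.
  rewrite (sumo (fun o => uo x o * uo x o)) big_sumType /= big_ord1 mul0r addr0.
  under eq_bigr do rewrite -expr2.
  exact: h2.
have nv : forall y, norm2 (v' y) <= Num.sqrt c.
  move=> y; rewrite /norm2 /dotv ler_wsqrtr //; under eq_bigr do rewrite !mxE.
  rewrite (sumo (fun o => vo y o * vo y o)) big_sumType /= big_ord1 mul0r addr0.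
  under eq_bigr do rewrite -expr2.
  exact: h3.
have inS : [set c0 : R | exists (d : nat) (u : X -> 'rV[R]_d) (v : Y -> 'rV[R]_d),
        (0 < d)%N /\
        (forall x y, dotv (u x) (v y) = A x y) /\
        (forall x y, norm2 (u x) * norm2 (v y) <= c0)]%classic c.
  exists #|I'|, u', v'; split; last split => //.
    by rewrite card_sum card_ord addn1.
  move=> x y; rewrite -(sqr_sqrtr c0) expr2; apply: ler_pM => //.
  - by rewrite /norm2 sqrtr_ge0.
  - by rewrite /norm2 sqrtr_ge0.
rewrite /gamma2.
case: (pselect (has_lbound [set c0 : R | exists (d : nat) (u : X -> 'rV[R]_d) (v : Y -> 'rV[R]_d),
        (0 < d)%N /\
        (forall x y, dotv (u x) (v y) = A x y) /\
        (forall x y, norm2 (u x) * norm2 (v y) <= c0)]%classic)) => hl.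
  exact: (ge_inf hl inS).
rewrite inf_out // => -[_ hl']; exact: hl hl'.
Qed.

Theorem proposition3p5 (R : realType) (X Y : finType) (r : nat)
  (B : 'I_r -> X -> Y -> bool) (Gamma : {ffun 'I_r -> bool} -> bool) :
  (forall i, blocky (B i)) ->
  gamma2 (fun x y => ((Gamma [ffun i => B i x y]) : nat)%:R : R) <= 3 ^+ r.
Proof.
move=> hB.
pose P (a : {ffun 'I_r -> bool}) i x y : R :=
  if a i then (B i x y : nat)%:R else 1 - (B i x y : nat)%:R.
pose cc (b : bool) : R := if b then 1 else 2.
have hP : forall a i, fct (P a i) (cc (a i)).
  move=> a i; rewrite /P /cc; case: (a i).
    exact: fct_blocky.
  apply: (fct_ext (fct_add (fct_one R X Y) (fct_neg (@fct_blocky R _ _ _ (hB i))))) => //.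
have hprod : forall a x y, \prod_i P a i x y = ((a == [ffun i => B i x y]) : nat)%:R.
  move=> a x y; set b := [ffun i => B i x y].
  case: (boolP [exists i, a i != b i]) => [/existsP [i hi]|/existsPn H].
    have -> : (a == b) = false by apply/negbTE; apply: contraNneq hi => ->.
    rewrite (bigD1 i) //= /P; move: hi; rewrite /b ffunE.
    by case: (a i); case: (B i x y) => //= _; rewrite ?subrr mul0r.
  have -> : a = b by apply/ffunP => i; apply/eqP; move: (H i); rewrite negbK.
  rewrite eqxx big1 // => i _; rewrite /P /b ffunE.
  by case: (B i x y); rewrite ?subr0.
have hF : fct (fun x y => ((Gamma [ffun i => B i x y]) : nat)%:R : R) (3 ^+ r).
  apply: (fct_ext (@fct_sum R X Y _ (index_enum {ffun 'I_r -> bool}) Gamma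
      (fun a x y => \prod_(i <- index_enum 'I_r) P a i x y)
      (fun a => \prod_(i <- index_enum 'I_r) cc (a i))
      (fun a _ => @fct_prod R X Y _ (index_enum 'I_r) (P a) (fun i => cc (a i)) (hP a)))).
  - move=> x y /=; set b := [ffun i => B i x y].
    transitivity (\sum_(a | Gamma a) ((a == b) : nat)%:R : R).
      by apply: eq_bigr => a _; rewrite hprod.
    rewrite big_mkcond (bigD1 b) //= eqxx big1 ?addr0.
      by case: (Gamma b).
    by move=> a hab; rewrite (negbTE hab); case: (Gamma a).
  - have H3 : \sum_(a : {ffun 'I_r -> bool}) \prod_i cc (a i) = 3 ^+ r :> R.
      rewrite -(bigA_distr_bigA (fun i (b : bool) => cc b)) /=.
      under eq_bigr do rewrite big_bool /cc.
      by rewrite prodr_const card_ord.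
    rewrite -H3 [leRHS](bigID Gamma) /= lerDl.
    by apply: sumr_ge0 => a _; apply: prodr_ge0 => i _; rewrite /cc; case: (a i).
apply: fct_gamma2 hF.
by apply: exprn_ge0.
Qed.
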